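(* Fix $t\in[T]$ and suppose $\|\theta^*\|_2\le L_\theta$ and $\|\widehat\theta_t-\theta^*\|_{\Sigma_t}\le\beta_t$. Let $p^*_{s,a,s'}=p(s'\mid s,a,\theta^* )$. Then $p^*\in\mathcal P'_t$, the set of $p\in[0,1]^{\mathcal S\times\mathcal A\times\mathcal S}$ such that for all $(s,a)$: $\sum_{s'\in\mathcal S_{s,a}}p_{s,a,s'}=1$ and $\sum_{s'\in\mathcal S_{s,a}}|p_{s,a,s'}-p(s'\mid s,a,\widehat\theta_t)|\le R_{t,s,a}$, where $R_{t,s,a}=2\beta_t\max_{s'\in\mathcal S_{s,a}}\|\varphi(s,a,s')\|_{\Sigma_t^{-1}}$.
   Context: MNL model: finite $\mathcal S,\mathcal A$; known reachable sets $\mathcal S_{s,a}$ and features $\varphi(s,a,s')\in\mathbb R^d$; $p(s'\mid s,a,\theta)=\exp(\varphi(s,a,s')^\top\theta)/\sum_{s''\in\mathcal S_{s,a}}\exp(\varphi(s,a,s'')^\top\theta)$ for $s'\in\mathcal S_{s,a}$; $\theta^*$ the true parameter. $\widehat\theta_t$ and the positive definite $\Sigma_t=\lambda I_d+\sum_{i<t}\nabla^2\ell_i(\widehat\theta_{i+1})$ are the online estimator's iterates; $\beta_t>0$ is the confidence radius. $\|x\|_A=\sqrt{x^\top Ax}$. *)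

(* Defs.v *)
From HB Require Import structures.
From mathcomp Require Import all_boot all_order all_algebra.
From mathcomp Require Import all_classical all_reals all_analysis.
Set Implicit Arguments. Unset Strict Implicit. Unset Printing Implicit Defensive.
Import Order.TTheory GRing.Theory Num.Theory.
Local Open Scope ring_scope.

Section MNL.
Variables (R : realType) (S A : finType) (d : nat).

Definition wnorm (M : 'M[R]_d) (x : 'cV[R]_d) : R :=
  Num.sqrt (((x^T *m M *m x) 0 0)).

Definition norm2 (x : 'cV[R]_d) : R := Num.sqrt ((x^T *m x) 0 0).

Definition posdef (M : 'M[R]_d) : Prop :=
  M^T = M /\ forall x : 'cV[R]_d, x != 0 -> 0 < (x^T *m M *m x) 0 0.

Variables (Sr : S -> A -> {set S}) (phi : S -> A -> S -> 'cV[R]_d).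

Definition mnl_prob (theta : 'cV[R]_d) (s : S) (a : A) (s' : S) : R :=
  if s' \in Sr s a then
    expR (((phi s a s')^T *m theta) 0 0) /
    \sum_(s'' in Sr s a) expR (((phi s a s'')^T *m theta) 0 0)
  else 0.

Definition radius (beta : R) (Sigma : 'M[R]_d) (s : S) (a : A) : R :=
  2 * beta * \big[Num.max/0]_(s' in Sr s a) wnorm (invmx Sigma) (phi s a s').

Definition conf_set (theta_hat : 'cV[R]_d) (beta : R) (Sigma : 'M[R]_d)
  (p : S -> A -> S -> R) : Prop :=
  (forall s a s', 0 <= p s a s' <= 1) /\
  forall s a,
    \sum_(s' in Sr s a) p s a s' = 1 /\
    \sum_(s' in Sr s a) `|p s a s' - mnl_prob theta_hat s a s'|
      <= radius beta Sigma s a.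

End MNL.

(* Main.v *)
Require Import Defs.
From HB Require Import structures.
From mathcomp Require Import all_boot all_order all_algebra.
From mathcomp Require Import all_classical all_reals all_analysis.
From mathcomp Require Import ring lra.
Import Order.TTheory GRing.Theory Num.Theory.
Local Open Scope ring_scope.
Set Implicit Arguments. Unset Strict Implicit.
Lemma key (R : realType) (a b c e s : R) : 0 <= a -> 0 <= b -> 0 <= c -> 0 <= e -> 1 <= s -> a <= s * c -> e <= s * b -> 0 < a + b -> 0 < c + e ->
 a / (a+b) - c/(c+e) <= (s-1)/(s+1).
Proof.
move=> a0 b0 c0 e0 s1 ac eb ab ce.
have d1 : 0 < (s*s) * c + e by nra.
have H1 : a / (a+b) <= (s*s) * c / ((s*s) * c + e).
  rewrite ler_pdivrMr // mulrAC (ler_pdivlMr _ _ d1). nra.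
apply: le_trans (lerB H1 (lexx _)) _.
have -> : (s*s) * c / ((s*s) * c + e) - c / (c + e) = c * e * ((s*s) - 1) / (((s*s)*c+e)*(c+e)).
  field. apply/andP; split; apply: lt0r_neq0 => //.
have s0 : 0 < s + 1 by lra.
rewrite ler_pdivrMr ?mulr_gt0 // [X in _ <= X]mulrAC ler_pdivlMr //.
rewrite -subr_ge0.
have -> : (s - 1) * ((s * s * c + e) * (c + e)) - c * e * (s * s - 1) * (s + 1) = (s - 1) * ((s*c - e) * (s*c - e)) by ring.
apply: mulr_ge0; [lra | by rewrite -expr2 sqr_ge0].
Qed.

Lemma l1_bound (R : realType) (I : finType) (D : {set I}) (x y : I -> R) (s : R) :
  (forall i, i \in D -> 0 < x i) -> (forall i, i \in D -> 0 < y i) -> 1 <= s ->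
  (forall i, i \in D -> x i <= s * y i) -> (forall i, i \in D -> y i <= s * x i) ->
  (0 < #|D|)%N ->
  \sum_(i in D) `| x i / (\sum_(j in D) x j) - y i / (\sum_(j in D) y j) |
    <= 2 * ((s - 1) / (s + 1)).
Proof.
move=> xp yp s1 hxy hyx /card_gt0P [i0 i0D].
set X := \sum_(j in D) x j; set Y := \sum_(j in D) y j.
have pos : forall f : I -> R, (forall i, i \in D -> 0 < f i) -> 0 < \sum_(j in D) f j.
  move=> f fp; rewrite (bigD1 i0) //=; apply: ltr_wpDr; last exact: fp.
  by apply: sumr_ge0 => i /andP [iD _]; apply/ltW/fp.
have X0 : 0 < X by exact: pos.
have Y0 : 0 < Y by exact: pos.
set v := fun i => x i / X - y i / Y.
have sv : \sum_(i in D) v i = 0.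
  rewrite /v sumrB -!mulr_suml -/X -/Y !divff ?subrr //; exact: lt0r_neq0.
set P := fun i => 0 <= v i.
have split1 : forall F : I -> R, \sum_(i in D) F i = \sum_(i in D | P i) F i + \sum_(i in D | ~~ P i) F i.
  by move=> F; rewrite (bigID P).
have eq1 : \sum_(i in D) `|v i| = 2 * \sum_(i in D | P i) v i.
  rewrite split1.
  have h1 : \sum_(i in D | P i) `|v i| = \sum_(i in D | P i) v i.
    by apply: eq_bigr => i /andP [_ Pi]; rewrite ger0_norm.
  have h2 : \sum_(i in D | ~~ P i) `|v i| = - \sum_(i in D | ~~ P i) v i.
    rewrite -sumrN; apply: eq_bigr => i /andP [_ Pi]; rewrite ltr0_norm //.
    by rewrite ltNge.
  have h3 := sv; rewrite split1 in h3.
  rewrite h1 h2.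
  have -> : \sum_(i in D | ~~ P i) v i = - \sum_(i in D | P i) v i.
    by apply/eqP; rewrite -addr_eq0 addrC; apply/eqP.
  by rewrite opprK mulr2n mulrDl mul1r.
rewrite /v in eq1 *. rewrite eq1 ler_pM2l //.
set a := \sum_(i in D | P i) x i; set b := \sum_(i in D | ~~ P i) x i.
set c := \sum_(i in D | P i) y i; set e := \sum_(i in D | ~~ P i) y i.
have -> : \sum_(i in D | P i) (x i / X - y i / Y) = a / X - c / Y.
  by rewrite sumrB -!mulr_suml.
have hX : X = a + b by rewrite /X split1.
have hY : Y = c + e by rewrite /Y split1.
rewrite hX hY; apply: key.
- by apply: sumr_ge0 => i /andP [iD _]; apply/ltW/xp.
- by apply: sumr_ge0 => i /andP [iD _]; apply/ltW/xp.
- by apply: sumr_ge0 => i /andP [iD _]; apply/ltW/yp.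
- by apply: sumr_ge0 => i /andP [iD _]; apply/ltW/yp.
- done.
- rewrite /a /c mulr_sumr; apply: ler_sum => i /andP [iD _]; exact: hxy.
- rewrite /e /b mulr_sumr; apply: ler_sum => i /andP [iD _]; exact: hyx.
- by rewrite -hX.
- by rewrite -hY.
Qed.

Section CS.
Variables (R : realType) (d : nat) (M : 'M[R]_d).
Hypothesis HM : posdef M.
Definition ip (u v : 'cV[R]_d) := (u^T *m M *m v) 0 0.

Lemma ip_sym u v : ip u v = ip v u.
Proof.
rewrite /ip -[in LHS](trmxK (u^T *m M *m v)) [in LHS]mxE.
by rewrite !trmx_mul trmxK HM.1 mulmxA.
Qed.

Lemma ip_ge0 u : 0 <= ip u u.
Proof.
have [->|nz] := eqVneq u 0; first by rewrite /ip mulmx0 mxE.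
exact/ltW/HM.2.
Qed.

Lemma ip_expand u v (l : R) :
  ip (u - l *: v) (u - l *: v) = ip u u - 2 * l * ip u v + l ^+ 2 * ip v v.
Proof.
rewrite /ip; have -> : (u - l *: v)^T = u^T - l *: v^T by rewrite linearB /= linearZ.
have := ip_sym v u; rewrite /ip => h.
rewrite !mulmxBl !mulmxBr -!scalemxAl -!scalemxAr !mxE.
have h2 : \sum_j (v^T *m M) 0 j * u j 0 = \sum_j (u^T *m M) 0 j * v j 0 by move: h; rewrite !mxE.
rewrite h2.
rewrite expr2; ring.
Qed.

Lemma cs u v : (ip u v) ^+ 2 <= ip u u * ip v v.
Proof.
have [->|nz] := eqVneq v 0.
  by rewrite /ip !mulmx0 !mxE expr0n /= mulr0.
have c0 : 0 < ip v v by exact: HM.2.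
have := ip_ge0 (u - (ip u v / ip v v) *: v); rewrite ip_expand.
move=> h.
have e : ip u u - 2 * (ip u v / ip v v) * ip u v + (ip u v / ip v v) ^+ 2 * ip v v
   = ip u u - (ip u v) ^+ 2 / ip v v.
  field; exact: lt0r_neq0.
rewrite e subr_ge0 ler_pdivrMr // in h.
Qed.
End CS.

Lemma posdef_unit (R : realType) (d : nat) (M : 'M[R]_d) : posdef M -> M \in unitmx.
Proof.
move=> HM; rewrite -row_free_unit; apply: inj_row_free => v vM.
apply/eqP; apply: contraT => nz.
have nz' : v^T != 0 by apply: contra nz => /eqP h; rewrite -(trmxK v) h trmx0.
have := HM.2 _ nz'.
by rewrite trmxK vM mul0mx mxE ltxx.
Qed.

Lemma dot_bound (R : realType) (d : nat) (M : 'M[R]_d) (ph D : 'cV[R]_d) :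
  posdef M -> `|(ph^T *m D) 0 0| <= wnorm (invmx M) ph * wnorm M D.
Proof.
move=> HM.
have U := posdef_unit HM.
set W := invmx M.
have WT : W^T = W by rewrite /W trmx_inv HM.1.
have h1 : ip M (W *m ph) D = (ph^T *m D) 0 0.
  by rewrite /ip trmx_mul WT -(mulmxA ph^T W M) (mulVmx U) mulmx1.
have h2 : ip M (W *m ph) (W *m ph) = (ph^T *m W *m ph) 0 0.
  by rewrite /ip trmx_mul WT -(mulmxA ph^T W M) (mulVmx U) mulmx1 mulmxA.
have := cs HM (W *m ph) D; rewrite h1 h2 => h.
rewrite /wnorm -sqrtrM; last by rewrite -h2; exact: ip_ge0.
by rewrite -sqrtr_sqr; apply: ler_wsqrtr.
Qed.

Lemma sum_expR_gt0 (R : realType) (I : finType) (D : {set I}) (f : I -> R) :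
  (0 < #|D|)%N -> 0 < \sum_(i in D) expR (f i).
Proof.
move=> /card_gt0P [i0 i0D]; rewrite (bigD1 i0) //=; apply: ltr_wpDr; last exact: expR_gt0.
by apply: sumr_ge0 => i _; exact: expR_ge0.
Qed.

Unset Implicit Arguments.

Theorem lemma16 (R : realType) (S A : finType) (d : nat)
  (Sr : S -> A -> {set S}) (phi : S -> A -> S -> 'cV[R]_d)
  (theta_star : 'cV[R]_d) (L_theta : R)
  (theta_hat : nat -> 'cV[R]_d) (Sigma : nat -> 'M[R]_d) (beta : nat -> R)
  (T t : nat) :
  (forall s a, (0 < #|Sr s a|)%N) ->
  (forall i, posdef (Sigma i)) ->
  (forall i, 0 < beta i) ->
  (1 <= t <= T)%N ->
  norm2 theta_star <= L_theta ->
  wnorm (Sigma t) (theta_hat t - theta_star) <= beta t ->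
  conf_set Sr phi (theta_hat t) (beta t) (Sigma t) (mnl_prob Sr phi theta_star).
Proof.
move=> Hne Hpd Hb _ _ Hw.
have Hb0 := Hb t.
split.
  move=> s a s'; rewrite /mnl_prob; case: ifP => H; last by rewrite lexx ler01.
  have Z0 := sum_expR_gt0 (fun i => ((phi s a i)^T *m theta_star) 0 0) (Hne s a).
  apply/andP; split; first by apply: divr_ge0; [exact: expR_ge0 | exact: ltW].
  rewrite ler_pdivrMr // mul1r (bigD1 s') //= lerDl.
  by apply: sumr_ge0 => i _; exact: expR_ge0.
move=> s a.
set D := Sr s a.
set zs := fun i => ((phi s a i)^T *m theta_star) 0 0.
set zh := fun i => ((phi s a i)^T *m theta_hat t) 0 0.
have Zs := sum_expR_gt0 zs (Hne s a).
have Zh := sum_expR_gt0 zh (Hne s a).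
split.
  rewrite (eq_bigr (fun i => expR (zs i) / \sum_(j in D) expR (zs j))); last first.
    by move=> i iD; rewrite /mnl_prob iD.
  by rewrite -mulr_suml divff //; exact: lt0r_neq0.
rewrite (eq_bigr (fun i => `|expR (zs i) / \sum_(j in D) expR (zs j) -
                             expR (zh i) / \sum_(j in D) expR (zh j)|)); last first.
  by move=> i iD; rewrite /mnl_prob iD.
set mx := \big[Num.max/0]_(s' in D) wnorm (invmx (Sigma t)) (phi s a s').
set dl := beta t * mx.
have hmx : forall i, i \in D -> wnorm (invmx (Sigma t)) (phi s a i) <= mx.
  by move=> i iD; rewrite /mx; apply: (le_bigmax_cond _ _ (P := fun j => j \in D)).
have mx0 : 0 <= mx.
  have /card_gt0P [i0 i0D] := Hne s a.
  by apply: le_trans (hmx _ i0D); apply: sqrtr_ge0.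
have dl0 : 0 <= dl by apply: mulr_ge0 => //; exact: ltW.
have hd : forall i, i \in D -> `|zs i - zh i| <= dl.
  move=> i iD.
  have -> : zs i - zh i = - ((phi s a i)^T *m (theta_hat t - theta_star)) 0 0.
    by rewrite /zs /zh mulmxBr !mxE opprB.
  rewrite normrN; apply: le_trans (dot_bound _ _ (Hpd t)) _.
  rewrite /dl mulrC; apply: ler_pM => //; first exact: sqrtr_ge0; first exact: sqrtr_ge0.
  exact: hmx.
have s1 : 1 <= expR dl by rewrite -expR0 ler_expR.
apply: le_trans (l1_bound (s := expR dl) _ _ s1 _ _ (Hne s a)) _.
- by move=> i _; exact: expR_gt0.
- by move=> i _; exact: expR_gt0.
- move=> i iD; rewrite -expRD ler_expR.
  by have := hd i iD; rewrite ler_norml => /andP [h1 h2]; lra.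
- move=> i iD; rewrite -expRD ler_expR.
  by have := hd i iD; rewrite ler_norml => /andP [h1 h2]; lra.
rewrite /Defs.radius -/D -/mx -mulrA ler_pM2l // -/dl.
have e1 := expR_ge1Dx (- dl).
have e2 : expR (- dl) * expR dl = 1 by rewrite expRN mulVf // gt_eqF // expR_gt0.
have ep := expR_gt0 dl.
rewrite ler_pdivrMr; last by lra.
nra.
Qed.
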